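(* Let $\Sigma$ and $\Delta$ be alphabets and $\varphi:\Delta\to 2^{\Sigma^*}$ a regular language substitution. (1) Let $\mathcal{R}_1=(K_1,\varphi)$ and $\mathcal{R}_2=(K_2,\varphi)$ be rational sets of regular languages with regular $K_1,K_2\subseteq\Delta^+$. Then $\mathcal{R}_1\cdot\mathcal{R}_2=\{L_1\cdot L_2\mid L_1\in\mathcal{R}_1,\ L_2\in\mathcal{R}_2\}$ is a rational set of regular languages of the form $(K',\varphi)$ for some regular $K'\subseteq\Delta^+$ (same substitution $\varphi$). If $\mathcal{R}_1$ and $\mathcal{R}_2$ are finite, then $\mathcal{R}_1\cdot\mathcal{R}_2$ is finite. (2) For every rational set of regular languages $\mathcal{R}$, the set $\mathcal{R}^\star=\bigcup_{i\in\mathbb{N}}\mathcal{R}^i$ is a rational set of regular languages. Moreover, $\mathcal{R}^\star$ is in general infinite even if $\mathcal{R}$ is finite: there exists a finite rational set of regular languages $\mathcal{R}$ for which $\mathcal{R}^\star$ is infinite.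
   Context: An alphabet is a nonempty finite set. A regular language substitution is a map $\varphi:\Delta\to 2^{\Sigma^*}$ such that each $\varphi(\delta)$ is a regular language over $\Sigma$. It is extended to words by $\varphi(\delta\cdot w)=\varphi(\delta)\cdot\varphi(w)$ and to languages $L$ by $\varphi(L)=\bigcup_{w\in L}\varphi(w)$. A set $\mathcal{R}$ of regular languages over $\Sigma$ is a rational set of regular languages (RSRL), written $\mathcal{R}=(K,\varphi)$, if there exist an alphabet $\Delta$, a regular language $K\subseteq\Delta^+$ and a regular language substitution $\varphi:\Delta\to2^{\Sigma^*}$ with $\mathcal{R}=\{\varphi(w)\mid w\in K\}$. Powers of sets of languages are defined by $\mathcal{R}^0=\{\{\varepsilon\}\}$ and $\mathcal{R}^{i+1}=\mathcal{R}^i\cdot\mathcal{R}$, with the product $\mathcal{R}_1\cdot\mathcal{R}_2=\{L_1L_2\mid L_1\in\mathcal{R}_1,L_2\in\mathcal{R}_2\}$. *)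

(* Defs.v *)
From mathcomp Require Import all_boot.
From Stdlib Require List.

Set Implicit Arguments.
Unset Strict Implicit.
Unset Printing Implicit Defensive.

Definition lang (S : finType) := seq S -> Prop.

Definition langset (S : finType) := lang S -> Prop.

Definition regular (S : finType) (L : lang S) : Prop :=
  exists (Q : finType) (q0 : Q) (F : pred Q) (trans : Q -> S -> Q),
    forall w : seq S, L w <-> F (foldl trans q0 w).

Definition eps_lang (S : finType) : lang S := fun w => w = [::].

Definition conc (S : finType) (L1 L2 : lang S) : lang S :=
  fun w => exists u v, w = u ++ v /\ L1 u /\ L2 v.

Definition regular_subst (D S : finType) (phi : D -> lang S) : Prop :=
  forall d, regular (phi d).

Fixpoint subst_word (D S : finType) (phi : D -> lang S) (w : seq D) : lang S :=
  match w with
  | [::] => @eps_lang S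
  | d :: w' => conc (phi d) (subst_word phi w')
  end.

Definition plus_lang (D : finType) (K : lang D) : Prop :=
  forall w, K w -> w <> [::].

Definition rsrl_of (D S : finType) (K : lang D) (phi : D -> lang S) : langset S :=
  fun L => exists w, K w /\ L = subst_word phi w.

Definition langset_eq (S : finType) (R1 R2 : langset S) : Prop :=
  forall L, R1 L <-> R2 L.

Definition is_RSRL (S : finType) (R : langset S) : Prop :=
  exists (D : finType) (K : lang D) (phi : D -> lang S),
    0 < #|D| /\ regular K /\ plus_lang K /\ regular_subst phi /\
    langset_eq R (rsrl_of K phi).

Definition lsprod (S : finType) (R1 R2 : langset S) : langset S :=
  fun L => exists L1 L2, R1 L1 /\ R2 L2 /\ L = conc L1 L2.

Fixpoint lspow (S : finType) (R : langset S) (i : nat) : langset S :=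
  match i with
  | 0 => fun L => L = @eps_lang S
  | i'.+1 => lsprod (lspow R i') R
  end.

Definition lsstar (S : finType) (R : langset S) : langset S :=
  fun L => exists i, lspow R i L.

Definition lsfinite (S : finType) (R : langset S) : Prop :=
  exists s : list (lang S), forall L, R L -> List.In L s.

(* Main.v *)
Require Import Defs.
From mathcomp Require Import all_boot.
From Stdlib Require FunctionalExtensionality PropExtensionality Classical_Prop.
From Stdlib Require List.

Set Implicit Arguments.
Unset Strict Implicit.
Unset Printing Implicit Defensive.

Lemma lang_ext (S : finType) (L1 L2 : lang S) : (forall w, L1 w <-> L2 w) -> L1 = L2.
Proof.
move=> H; apply: FunctionalExtensionality.functional_extensionality => w; apply: PropExtensionality.propositional_extensionality; exact: H.
Qed.

Lemma conc_assoc (S : finType) (A B C : lang S) : conc (conc A B) C = conc A (conc B C).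
Proof.
apply: lang_ext => w; split.
- move=> [x [z [-> [[u [v [-> [Au Bv]]]] Cz]]]].
  exists u, (v ++ z); rewrite catA; split=> //; split=> //; by exists v, z.
- move=> [u [y [-> [Au [v [z [-> [Bv Cz]]]]]]]].
  exists (u ++ v), z; rewrite catA; split=> //; split=> //; by exists u, v.
Qed.

Lemma conc_eps_l (S : finType) (A : lang S) : conc (@eps_lang S) A = A.
Proof.
apply: lang_ext => w; split.
- move=> [u [v [-> [Hu Av]]]]; move: Hu; rewrite /eps_lang => ->; exact: Av.
- by move=> Aw; exists [::], w.
Qed.

Lemma sw_cat (D S : finType) (phi : D -> lang S) u v :
  subst_word phi (u ++ v) = conc (subst_word phi u) (subst_word phi v).
Proof. elim: u => [|d u IH] /=; first by rewrite conc_eps_l. by rewrite IH conc_assoc. Qed.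

Lemma regular_ext (S : finType) (L1 L2 : lang S) :
  (forall w, L1 w <-> L2 w) -> regular L1 -> regular L2.
Proof.
move=> H [Q [q0 [F [t Ht]]]]; exists Q, q0, F, t => w.
split=> [/H/Ht | /Ht/H] //.
Qed.

Definition ltrans (S : finType) (a : S) (q : option bool) (c : S) : option bool :=
  if (q == Some false) && (c == a) then Some true else None.

Lemma regular_letter (S : finType) (a : S) : regular (fun w : seq S => w = [:: a]).
Proof.
have Hn : forall w, foldl (ltrans a) None w = None.
  elim=> [|c w IH] //=; by have -> : ltrans a None c = None by [].
exists (option bool), (Some false), (fun q => q == Some true), (ltrans a) => w.
case: w => [|c w] /=; first by split.
have E1 : ltrans a (Some false) c = if c == a then Some true else None by [].
have E2 : forall c', ltrans a (Some true) c' = None by [].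
rewrite E1; case: (c =P a) => [->|Hc] /=.
- case: w => [|c' w] /=; first by split.
  rewrite E2 Hn; by split.
- rewrite Hn; split=> // [[]] //.
Qed.

Lemma regular_eps (S : finType) : regular (@eps_lang S).
Proof.
exists bool, true, (fun b : bool => b), (fun _ _ => false) => w.
case: w => [|c w] /=; first by split.
have -> : foldl (fun _ _ => false) false w = false by elim: w.
by split.
Qed.

Lemma regular_union (S : finType) (L1 L2 : lang S) :
  regular L1 -> regular L2 -> regular (fun w => L1 w \/ L2 w).
Proof.
move=> [Q1 [q1 [F1 [t1 H1]]]] [Q2 [q2 [F2 [t2 H2]]]].
exists (Q1 * Q2)%type, (q1, q2), (fun q => F1 q.1 || F2 q.2),
  (fun q c => (t1 q.1 c, t2 q.2 c)).
have E : forall w p, foldl (fun q c => (t1 q.1 c, t2 q.2 c)) p w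
   = (foldl t1 p.1 w, foldl t2 p.2 w).
  by elim=> [|c w IH] [p1 p2] //=; rewrite IH.
move=> w; rewrite E /=; split.
- by case=> [/H1 -> | /H2 ->] //; rewrite orbT.
- by case/orP=> [/H1|/H2]; [left|right].
Qed.

Definition mstrans (S Q : finType) (t : Q -> S -> Q) (q : option Q) (c : option S) :=
  match q, c with Some q, Some c => Some (t q c) | _, _ => None end.

Lemma regular_mapSome (S : finType) (L : lang S) : regular L ->
  regular (fun w : seq (option S) => exists u, w = map Some u /\ L u).
Proof.
move=> [Q [q0 [F [t H]]]].
pose F' := fun q : option Q => if q is Some q then F q else false.
exists (option Q), (Some q0), F', (mstrans t).
have Hn : forall w, foldl (mstrans t) None w = None by elim=> [|c w IH] //=.
have E : forall w q, F' (foldl (mstrans t) (Some q) w) <->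
                  exists u, w = map Some u /\ F (foldl t q u).
  elim=> [|c w IH] q /=.
  - split; first by move=> h; exists [::].
    by move=> [[|x u] [E h]].
  - case: c => [d|] /=.
    + rewrite IH; split.
      * by case=> u [-> h]; exists (d :: u).
      * by move=> [[|x u] [//= [-> ->] h]]; exists u.
    + rewrite Hn; split=> //.
      by move=> [[|x u] []].
move=> w; rewrite E; split.
- by case=> u [-> /H h]; exists u.
- by case=> u [-> /H h]; exists u.
Qed.

Lemma rcons_split (T : eqType) (w u v : seq T) (c : T) :
  rcons w c = u ++ v <->
  (v = [::] /\ u = rcons w c) \/ (exists v', v = rcons v' c /\ w = u ++ v').
Proof.
split.
- case/lastP: v => [|v' b]; first by rewrite cats0 => ->; left.
  rewrite -rcons_cat => /eqP; rewrite eqseq_rcons => /andP [/eqP -> /eqP ->].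
  by right; exists v'.
- case=> [[-> ->]|[v' [-> ->]]]; first by rewrite cats0.
  by rewrite rcons_cat.
Qed.

Section Conc.
Variables (S Q1 Q2 : finType) (q1 : Q1) (F1 : pred Q1) (t1 : Q1 -> S -> Q1)
  (q2 : Q2) (F2 : pred Q2) (t2 : Q2 -> S -> Q2).
Definition cst (q : Q1) : {set Q2} := if F1 q then [set q2] else set0.
Definition ctrans (p : Q1 * {set Q2}) (c : S) : Q1 * {set Q2} :=
  (t1 p.1 c, [set t2 s c | s in p.2] :|: cst (t1 p.1 c)).

Lemma ctrans_inv w : (foldl ctrans (q1, cst q1) w).1 = foldl t1 q1 w /\
  forall s, s \in (foldl ctrans (q1, cst q1) w).2 <->
    exists u v, w = u ++ v /\ F1 (foldl t1 q1 u) /\ s = foldl t2 q2 v.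
Proof.
elim/last_ind: w => [|w c [IH1 IH2]].
- split=> // s /=; rewrite /cst; split.
  + case: ifP => HF; last by rewrite in_set0.
    rewrite in_set1 => /eqP ->; by exists [::], [::].
  + move=> [[|x u] [[|y v] [//= _ [HF ->]]]].
    by rewrite HF in_set1.
- rewrite !foldl_rcons /= IH1; split=> // s.
  rewrite in_setU; split.
  + case/orP.
    * case/imsetP=> s' /IH2 [u [v' [-> [HF ->]]]] ->.
      exists u, (rcons v' c); split; first by rewrite rcons_cat.
      by rewrite foldl_rcons.
    * rewrite /cst; case: ifP => HF; last by rewrite in_set0.
      rewrite in_set1 => /eqP ->.
      exists (rcons w c), [::]; rewrite cats0 foldl_rcons; by [].
  + case=> u [v [/rcons_split [[-> ->]|[v' [-> Ew]]] [HF ->]]].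
    * rewrite foldl_rcons in HF; by rewrite /cst HF in_set1 eqxx orbT.
    * apply/orP; left; rewrite foldl_rcons; apply: imset_f.
      apply/IH2; by exists u, v'.
Qed.
End Conc.

Lemma regular_conc (S : finType) (L1 L2 : lang S) :
  regular L1 -> regular L2 -> regular (conc L1 L2).
Proof.
move=> [Q1 [q1 [F1 [t1 H1]]]] [Q2 [q2 [F2 [t2 H2]]]].
exists (Q1 * {set Q2})%type, (q1, cst F1 q2 q1), (fun p : Q1 * {set Q2} => [exists s in p.2, F2 s]),
  (ctrans F1 t1 q2 t2) => w.
have I := fun w => proj2 (ctrans_inv q1 F1 t1 q2 t2 w).
split.
- case=> u [v [-> [/H1 h1 /H2 h2]]].
  apply/existsP; exists (foldl t2 q2 v); rewrite h2 andbT.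
  apply/I; by exists u, v.
- case/existsP=> s /andP [/I [u [v [-> [hu ->]]]] hs].
  by exists u, v; split=> //; split; [apply/H1|apply/H2].
Qed.

Inductive kstar (D : finType) (K : lang D) : seq D -> Prop :=
| ks_nil : kstar K [::]
| ks_snoc x u : kstar K x -> K u -> u <> [::] -> kstar K (x ++ u).

Definition Kplus (D : finType) (K : lang D) : lang D :=
  fun w => exists x v, w = x ++ v /\ kstar K x /\ K v.

Section Star.
Variables (S Q : finType) (q0 : Q) (F : pred Q) (t : Q -> S -> Q) (L : lang S).
Hypothesis HL : forall w, L w <-> F (foldl t q0 w).
Definition sstep (X : {set Q}) (c : S) : {set Q} :=
  [set t s c | s in X] :|:
    (if [exists s in [set t s c | s in X], F s] then [set q0] else set0).

Lemma sstep_inv w : forall s, s \in foldl sstep [set q0] w <->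
  exists x v, w = x ++ v /\ kstar L x /\ s = foldl t q0 v.
Proof.
elim/last_ind: w => [|w c IH] s.
- split.
  + rewrite in_set1 => /eqP ->; exists [::], [::]; split=> //; split=> //; exact: ks_nil.
  + move=> [[|x u] [[|y v] [//= _ [_ ->]]]]; by rewrite in_set1.
- have key : [exists s in [set t s c | s in foldl sstep [set q0] w], F s]
             <-> kstar L (rcons w c).
    split.
    + case/existsP=> s' /andP [/imsetP [s'' /IH [x [v' [-> [kx ->]]]] ->] hF].
      rewrite -cats1 -catA cats1.
      apply: ks_snoc => //; last by move/(congr1 size); rewrite size_rcons.
      by apply/HL; rewrite foldl_rcons.
    + move=> H; inversion H as [H0|x u kx Lu un E].
      * by move: H0; case: (w).
      * move/esym/rcons_split: E => [[un' _]|[v' [Eu Ew]]]; first by []. rewrite Eu in Lu.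
        apply/existsP; exists (t (foldl t q0 v') c); apply/andP; split.
        -- apply: imset_f; apply/IH; by exists x, v'.
        -- by move/HL: Lu; rewrite foldl_rcons.
  rewrite foldl_rcons /sstep in_setU; split.
  + case/orP.
    * case/imsetP=> s' /IH [x [v' [-> [kx ->]]]] ->.
      exists x, (rcons v' c); split; first by rewrite rcons_cat.
      by rewrite foldl_rcons.
    * case: ifP => hk; last by rewrite in_set0.
      rewrite in_set1 => /eqP ->.
      exists (rcons w c), [::]; rewrite cats0; split=> //; split=> //.
      by apply/key; rewrite hk.
  + case=> x [v [/rcons_split [[-> ->]|[v' [-> Ew]]] [kx ->]]].
    * have hk := proj2 key kx.
      apply/orP; right; move: hk; case: ifP=> // _ _; by rewrite in_set1.
    * apply/orP; left; rewrite foldl_rcons; apply: imset_f.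
      apply/IH; by exists x, v'.
Qed.

Lemma sstep_accept w : [exists s in foldl sstep [set q0] w, F s] <-> Kplus L w.
Proof.
split.
- case/existsP=> s /andP [/sstep_inv [x [v [-> [kx ->]]]] hF].
  by exists x, v; split=> //; split=> //; apply/HL.
- case=> x [v [-> [kx /HL hv]]].
  apply/existsP; exists (foldl t q0 v); rewrite hv andbT.
  apply/sstep_inv; by exists x, v.
Qed.
End Star.

Lemma regular_Kplus (S : finType) (L : lang S) : regular L -> regular (Kplus L).
Proof.
move=> [Q [q0 [F [t H]]]].
exists {set Q}, [set q0], (fun X : {set Q} => [exists s in X, F s]), (sstep q0 F t) => w.
by rewrite (sstep_accept H).
Qed.

Fixpoint kpow (D : finType) (K : lang D) (i : nat) : lang D :=
  match i with
  | 0 => fun x => x = [::]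
  | i'.+1 => fun x => exists y u, x = y ++ u /\ kpow K i' y /\ K u
  end.

Lemma kstar_kpow (D : finType) (K : lang D) : plus_lang K ->
  forall x, kstar K x <-> exists i, kpow K i x.
Proof.
move=> PK x; split.
- elim=> [|y u _ [i Hi] Ku _]; first by exists 0.
  by exists i.+1, y, u.
- case=> i; elim: i x => [|i IH] x /=; first by move=> ->; exact: ks_nil.
  case=> y [u [-> [ky Ku]]]; apply: ks_snoc => //; [exact: IH | exact: PK].
Qed.

Lemma Kplus_kpow (D : finType) (K : lang D) : plus_lang K ->
  forall w, Kplus K w <-> exists i, kpow K i.+1 w.
Proof.
move=> PK w; split.
- case=> x [v [-> [/(kstar_kpow PK) [i Hi] Kv]]]; by exists i, x, v.
- case=> i [y [u [-> [ky Ku]]]]; exists y, u; split=> //; split=> //.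
  apply/(kstar_kpow PK); by exists i.
Qed.

Lemma lspow_kpow (D S : finType) (K : lang D) (phi : D -> lang S) (R : langset S) :
  langset_eq R (rsrl_of K phi) ->
  forall i L, lspow R i L <-> exists w, kpow K i w /\ L = subst_word phi w.
Proof.
move=> HR; elim=> [|i IH] L /=.
- split; first by move=> ->; exists [::].
  by case=> w [-> ->].
- split.
  + case=> L1 [L2 [/IH [y [ky ->]] [/HR [u [Ku ->]] ->]]].
    exists (y ++ u); rewrite sw_cat; split=> //; by exists y, u.
  + case=> w [[y [u [-> [ky Ku]]]] ->].
    exists (subst_word phi y), (subst_word phi u); rewrite sw_cat.
    split; first by apply/IH; exists y.
    split=> //; apply/HR; by exists u.
Qed.

Definition phiopt (D S : finType) (phi : D -> lang S) (o : option D) : lang S :=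
  match o with None => @eps_lang S | Some d => phi d end.

Lemma sw_map (D S : finType) (phi : D -> lang S) w :
  subst_word (phiopt phi) (map Some w) = subst_word phi w.
Proof. by elim: w => //= d w ->. Qed.

Lemma avoid_list (T : Type) (f : nat -> T) (finj : forall i j, f i = f j -> i = j)
  (s : list T) : forall N, exists i, N <= i /\ ~ List.In (f i) s.
Proof.
elim: s => [|a s IH] N; first by exists N; split=> //=.
have [i [Ni Hi]] := IH N.
have [j [Nj Hj]] := IH i.+1.
case: (Classical_Prop.classic (f i = a)) => Ha.
- exists j; split; first by apply: leq_trans Ni (ltnW Nj).
  case=> [E|//]; have := finj _ _ (etrans Ha E) => Eij.
  by move: Nj; rewrite Eij ltnn.
- exists i; split=> //; case=> // E; by apply: Ha; rewrite E.
Qed.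

Definition ex_K : lang unit := fun w => w = [:: tt].
Definition ex_phi : unit -> lang bool := fun _ w => w = [:: true].

Lemma ex_fam i w : subst_word ex_phi (nseq i tt) w <-> w = nseq i true.
Proof.
elim: i w => [|i IH] w /=; first by [].
split.
- by case=> u [v [-> [-> /IH ->]]].
- move=> ->; exists [:: true], (nseq i true); split=> //; split=> //; exact/IH.
Qed.

Lemma nseqS_cat (T : Type) (x : T) i : nseq i.+1 x = nseq i x ++ [:: x].
Proof. by elim: i => //= i <-. Qed.

Theorem proposition1 :
  (forall (S D : finType) (phi : D -> lang S) (K1 K2 : lang D),
      0 < #|S| -> 0 < #|D| -> regular_subst phi ->
      regular K1 -> plus_lang K1 -> regular K2 -> plus_lang K2 ->
      (exists K' : lang D, regular K' /\ plus_lang K' /\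
         langset_eq (lsprod (rsrl_of K1 phi) (rsrl_of K2 phi)) (rsrl_of K' phi)) /\
      (lsfinite (rsrl_of K1 phi) -> lsfinite (rsrl_of K2 phi) ->
         lsfinite (lsprod (rsrl_of K1 phi) (rsrl_of K2 phi)))) /\
  (forall (S : finType) (R : langset S),
      0 < #|S| -> is_RSRL R -> is_RSRL (lsstar R)) /\
  (exists (S : finType) (R : langset S),
      0 < #|S| /\ is_RSRL R /\ lsfinite R /\ ~ lsfinite (lsstar R)).
Proof.
split; [|split].
- move=> S D phi K1 K2 _ _ _ rK1 pK1 rK2 pK2; split.
  + exists (conc K1 K2); split; first exact: regular_conc.
    split.
    * by move=> w [u [v [-> [Ku _]]]]; case: u Ku => // /pK1.
    * move=> L; split.
      -- case=> L1 [L2 [[u [Ku ->]] [[v [Kv ->]] ->]]].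
         exists (u ++ v); rewrite sw_cat; split=> //; by exists u, v.
      -- case=> w [[u [v [-> [Ku Kv]]]] ->].
         exists (subst_word phi u), (subst_word phi v); rewrite sw_cat.
         split; first by exists u.
         split=> //; by exists v.
  + case=> s1 H1 [s2 H2].
    exists (List.flat_map (fun L1 => List.map (conc L1) s2) s1).
    move=> L [L1 [L2 [R1 [R2 ->]]]].
    apply/List.in_flat_map; exists L1; split; first exact: H1.
    apply: List.in_map; exact: H2.
- move=> S R _ [D [K [phi [cD [rK [pK [rphi HR]]]]]]].
  exists (option D), (fun w => w = [:: None] \/ exists u, w = map Some u /\ Kplus K u),
    (phiopt phi).
  split; first by rewrite card_option.
  split.
  + apply: regular_union; first exact: regular_letter.
    apply: regular_mapSome; exact: regular_Kplus.
  split.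
  + move=> w [->//|[u [-> [x [v [-> [_ Kv]]]]]]].
    by move: (pK v Kv); case: x => //=; case: v {Kv}.
  split.
  + case=> [d|]; [exact: rphi | exact: regular_eps].
  move=> L; split.
  + move=> [[|i] /(lspow_kpow HR) [w [kw ->]]].
    * exists [:: None]; split; first by left.
      by move: kw => /= ->; rewrite /= conc_eps_l.
    * exists (map Some w); rewrite sw_map; split=> //; right; exists w; split=> //.
      apply/(Kplus_kpow pK); by exists i.
  + case=> w' [[->|[u [-> /(Kplus_kpow pK) [i ki]]]] ->].
    * exists 0; by rewrite /= conc_eps_l.
    * exists i.+1; rewrite sw_map; apply/(lspow_kpow HR); by exists u.
- exists bool, (rsrl_of ex_K ex_phi).
  have HR : langset_eq (rsrl_of ex_K ex_phi) (rsrl_of ex_K ex_phi) by [].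
  split; first by rewrite card_bool.
  split.
  + exists unit, ex_K, ex_phi; split; first by rewrite card_unit.
    split; first exact: regular_letter.
    split; first by move=> w ->.
    split=> //; move=> d; exact: regular_letter.
  split.
  + exists [:: subst_word ex_phi [:: tt]] => L [w [Kw ->]].
    have -> : w = [:: tt] := Kw; by left.
  + case=> s Hs.
    pose fam i := subst_word ex_phi (nseq i tt).
    have finj : forall i j, fam i = fam j -> i = j.
      move=> i j E.
      have : fam i (nseq i true) by apply/ex_fam.
      rewrite E => /ex_fam /(congr1 size); by rewrite !size_nseq.
    have [i [_ Hi]] := avoid_list finj s 0.
    apply: Hi; apply: Hs; exists i; apply/(lspow_kpow HR); exists (nseq i tt).
    split=> //.
    elim: i => [|i IH] //=.
    exists (nseq i tt), [:: tt]; split; first exact: nseqS_cat.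
    by split.
Qed.
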